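(* Let $G=(V,E)$ be a finite simple graph of order $n$ and let $T=n-1$. If $(s,x,y,z)$ is an optimal solution of the integer program with the constraints of the Infection Model $\mathrm{IM}(G,T)$ and objective ''minimize $\sum_{v\in V}s_v+z$'', then $C=\{v\in V\colon s_v=1\}$ is a zero forcing set of $G$ with $\mathrm{th}(G)=\mathrm{th}(G,C)=\sum_{v\in V}s_v+z$.
   Context: Zero forcing: under the standard color change rule a filled vertex $u$ can force a non-filled vertex $v$ if $v$ is the only non-filled neighbor of $u$; $C\subseteq V$ is a zero forcing set if, starting with $C$ filled and repeatedly forcing, all of $V$ becomes filled. The propagation time $\mathrm{pt}(G,C)$ is the smallest $t^*$ such that, starting from $C^{[0]}=C$ and setting $C^{[t]}=C^{[t-1]}\cup\{v\notin C^{[t-1]}\colon$ some $u\in C^{[t-1]}$ has $v$ as its only neighbor outside $C^{[t-1]}\}$, one has $C^{[t^*]}=V$ ($\infty$ if $C$ is not a zero forcing set). The throttling number of $C$ is $\mathrm{th}(G,C)=|C|+\mathrm{pt}(G,C)$ and $\mathrm{th}(G)=\min_{C\subseteq V}\mathrm{th}(G,C)$. $N(u)$ is the neighborhood of $u$. Infection Model constraints: let $A$ be the set of arcs containing both $(u,v)$ and $(v,u)$ for each edge $\{u,v\}\in E$. Variables $s_v\in\{0,1\}$ and $x_v\in\{0,1,\dots,T\}$ for $v\in V$, $y_a\in\{0,1\}$ for $a\in A$, and $z\in\{0,1,\dots,T\}$, subject to: (i) $s_v+\sum_{a=(u,v)\in A}y_a=1$ for all $v\in V$; (ii) $x_u-x_v+(T+1)y_a\leq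 T$ for all $a=(u,v)\in A$; (iii) $x_w-x_v+(T+1)y_a\leq T$ for all $a=(u,v)\in A$ and $w\in N(u)\setminus\{v\}$; (iv) $x_v-z\leq 0$ for all $v\in V$. *)

(* Defs.v *)
From mathcomp Require Import all_boot.
From Stdlib Require Import ClassicalEpsilon.
Set Implicit Arguments. Unset Strict Implicit. Unset Printing Implicit Defensive.

Definition simple_graph (V : finType) (e : rel V) : Prop :=
  symmetric e /\ irreflexive e.

Section ZeroForcing.
Variables (V : finType) (e : rel V).

Definition force_step (C : {set V}) : {set V} :=
  C :|: [set v | (v \notin C) &&
     [exists u, (u \in C) && (e u v) &&
        [forall w, (e u w && (w \notin C)) ==> (w == v)]]].

Definition zero_forcing_set (C : {set V}) : Prop :=
  exists t, iter t force_step C = setT.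

(* propagation time: Some (least t with C^[t] = V), or None (= infinity). *)
Definition prop_time (C : {set V}) : option nat :=
  match excluded_middle_informative
          (exists t, (fun t => iter t force_step C == setT) t) with
  | left H => Some (ex_minn H)
  | right _ => None
  end.

Definition throttling_of (C : {set V}) : option nat :=
  omap (fun p => #|C| + p) (prop_time C).

Definition is_throttling_number (k : nat) : Prop :=
  (exists C, throttling_of C = Some k) /\
  (forall C k', throttling_of C = Some k' -> k <= k').

(* Infection Model IM(G,T); variables s_v, y_a in {0,1} (booleans),
   x_v, z in {0..T}; y is indexed by ordered pairs, only arcs (u,v) with
   e u v are used.  Constraints (ii),(iii) are rearranged to avoid
   truncated subtraction: a - b + c <= T  <->  a + c <= T + b. *)
Definition IM_feasible (T : nat) (s : V -> bool) (x : V -> nat)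
    (y : V -> V -> bool) (z : nat) : Prop :=
  (forall v, x v <= T) /\ z <= T /\
  (forall v, s v + \sum_(u | e u v) (y u v : nat) = 1) /\
  (forall u v, e u v -> x u + T.+1 * y u v <= T + x v) /\
  (forall u v w, e u v -> e u w -> w != v -> x w + T.+1 * y u v <= T + x v) /\
  (forall v, x v <= z).

Definition IM_objective (s : V -> bool) (z : nat) : nat :=
  \sum_v (s v : nat) + z.

Definition IM_optimal (T : nat) (s : V -> bool) (x : V -> nat)
    (y : V -> V -> bool) (z : nat) : Prop :=
  IM_feasible T s x y z /\
  forall s' x' y' z', IM_feasible T s' x' y' z' ->
    IM_objective s z <= IM_objective s' z'.

End ZeroForcing.

(* Main.v *)
Require Import Defs.
From mathcomp Require Import all_boot.
From mathcomp Require Import zify.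
From Stdlib Require Import ClassicalEpsilon.
Set Implicit Arguments. Unset Strict Implicit.

Lemma sub_iter (V : finType) (e : rel V) (C : {set V}) m n : m <= n ->
  iter m (force_step e) C \subset iter n (force_step e) C.
Proof.
move/subnK <-; elim: (n - m) => [|k IH] //=.
by apply: subset_trans IH (subsetUl _ _).
Qed.

Lemma card_sum (V : finType) (C : {set V}) : \sum_v ((v \in C) : nat) = #|C|.
Proof.
by rewrite -sum1_card [RHS]big_mkcond /=; apply: eq_bigr => i _; case: (i \in C).
Qed.

Lemma feas_fill (V : finType) (e : rel V) T s x y z :
  IM_feasible e T s x y z ->
  forall t v, x v <= t -> v \in iter t (force_step e) [set v | s v].
Proof.
move=> [hxT [hz [hs [h2 [h3 h4]]]]].
have forcer : forall v, ~~ s v -> exists u, e u v && y u v.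
  move=> v nsv; case: (pickP (fun u => e u v && y u v)) => [u hu|hn].
    by exists u.
  have h0 : \sum_(u | e u v) (y u v : nat) = 0.
    by apply: big1 => u huv; move: (hn u); rewrite huv /= => ->.
  by move: (hs v); rewrite (negbTE nsv) h0.
elim=> [|t IH] v hv.
  case hsv: (s v); first by rewrite /= inE hsv.
  have [u /andP [euv yuv]] := forcer v (negbT hsv).
  have := h2 u v euv; rewrite yuv muln1; lia.
case hsv: (s v).
  by apply: (subsetP (sub_iter _ _ (leq0n t.+1))); rewrite /= inE hsv.
have [u /andP [euv yuv]] := forcer v (negbT hsv).
have := h2 u v euv; rewrite yuv muln1 => hu.
case hvt: (v \in iter t (force_step e) [set v | s v]).
  by rewrite iterS /force_step inE hvt.
rewrite iterS /force_step; apply/setUP; right; rewrite inE hvt /=.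
apply/existsP; exists u; rewrite euv IH /=; last by lia.
apply/forallP => w; apply/implyP => /andP [euw wn].
apply/negPn/negP => wv.
have := h3 u v w euv euw wv; rewrite yuv muln1 => hw.
have : w \in iter t (force_step e) [set v | s v] by apply: IH; lia.
by rewrite (negbTE wn).
Qed.

Lemma prop_time_spec (V : finType) (e : rel V) C t :
  iter t (force_step e) C = setT -> exists p, prop_time e C = Some p /\
  iter p (force_step e) C = setT /\
  (forall t', iter t' (force_step e) C = setT -> p <= t').
Proof.
move=> ht; rewrite /prop_time; case: excluded_middle_informative => [H|H]; last first.
  by exfalso; apply: H; exists t; apply/eqP.
case: ex_minnP => p /eqP hp hmin; exists p; split => //; split => // t' ht'.
by apply: hmin; apply/eqP.
Qed.

Lemma prop_time_some (V : finType) (e : rel V) C p :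
  prop_time e C = Some p -> iter p (force_step e) C = setT.
Proof.
rewrite /prop_time; case: excluded_middle_informative => // H [<-].
by case: ex_minnP => q /eqP.
Qed.

Lemma stuck (V : finType) (e : rel V) C k :
  iter k.+1 (force_step e) C = iter k (force_step e) C ->
  forall m, iter (m + k) (force_step e) C = iter k (force_step e) C.
Proof. by move=> /= H; elim=> [|m IH] //=; rewrite IH. Qed.

Lemma fs0 (V : finType) (e : rel V) : force_step e set0 = set0.
Proof.
apply/setP => v; rewrite /force_step !inE /=.
by apply/existsP => -[u]; rewrite inE.
Qed.

Lemma bound (V : finType) (e : rel V) C p :
  iter p (force_step e) C = setT ->
  (forall t, iter t (force_step e) C = setT -> p <= t) -> p <= #|V| - 1.
Proof.
move=> hp hmin.
have grow : forall k, k <= p -> k + #|C| <= #|iter k (force_step e) C|.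
  elim=> [|k IH] hk //.
  have IH' := IH (ltnW hk).
  have pr : iter k (force_step e) C \proper iter k.+1 (force_step e) C.
    rewrite properEneq sub_iter // andbT; apply/eqP => heq.
    have := stuck (esym heq) (p - k); rewrite subnK ?(ltnW hk) // hp => hk'.
    by have := hmin k (esym hk'); rewrite leqNgt hk.
  have := proper_card pr; lia.
have := grow p (leqnn p); have := max_card (iter p (force_step e) C).
case: (posnP #|C|) => [/eqP hC|hC]; last by lia.
rewrite cards_eq0 in hC; move/eqP: hC => hC; subst C.
have h0 : forall t, iter t (force_step e) set0 = set0.
  by elim=> //= t ->; apply: fs0.
by have := hmin 0; rewrite /= -(h0 p) hp => /(_ erefl); rewrite leqn0 => /eqP ->.
Qed.

Lemma build (V : finType) (e : rel V) C p :
  iter p (force_step e) C = setT ->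
  (forall t, iter t (force_step e) C = setT -> p <= t) -> p <= #|V| - 1 ->
  exists s x y, IM_feasible e (#|V| - 1) s x y p /\ IM_objective s p = #|C| + p.
Proof.
move=> hp hmin hT.
have Hex : forall v, exists t, v \in iter t (force_step e) C.
  by move=> v; exists p; rewrite hp inE.
pose xf v := ex_minn (Hex v).
have xin : forall v, v \in iter (xf v) (force_step e) C.
  by move=> v; rewrite /xf; case: ex_minnP.
have xmin : forall v t, v \in iter t (force_step e) C -> xf v <= t.
  by move=> v t; rewrite /xf; case: ex_minnP => m _ hm; apply: hm.
have xp : forall v, xf v <= p by move=> v; apply: xmin; rewrite hp inE.
have xpos : forall v, v \notin C -> 0 < xf v.
  move=> v vC; case E: (xf v) => [|k] //.
  by have := xin v; rewrite E /= (negbTE vC).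
pose Pf v u := (u \in iter (xf v).-1 (force_step e) C) && e u v &&
  [forall w, (e u w && (w \notin iter (xf v).-1 (force_step e) C)) ==> (w == v)].
have exPf : forall v, v \notin C -> exists u, Pf v u.
  move=> v vC; case E: (xf v) => [|k].
    by have := xin v; rewrite E /= (negbTE vC).
  have := xin v; rewrite E /= /force_step inE => /orP [h|].
    by have := xmin v k h; rewrite E ltnn.
  by rewrite inE => /andP [_ /existsP [u hu]]; exists u; rewrite /Pf E /=.
pose y u v := (v \notin C) && ([pick u' | Pf v u'] == Some u).
have yP : forall u v, y u v -> (v \notin C) /\ Pf v u.
  move=> u v /andP [vC hpk]; split => //; move: hpk.
  by case: pickP => // u' hu' /eqP [<-].
exists (fun v => v \in C), xf, y; split; last first.
  by rewrite /IM_objective card_sum.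
split; first by move=> v; have := xp v; lia.
split => //.
split.
  move=> v; case vC: (v \in C).
    by rewrite big1 // => u _; rewrite /y vC.
  rewrite /y vC /=.
  case: (pickP (Pf v)) => [u0 hu0|hn]; last first.
    by have [u hu] := exPf v (negbT vC); rewrite hn in hu.
  have eu0 : e u0 v by case/andP: hu0 => /andP [].
  rewrite (bigD1 u0) //= eqxx big1 // => u /andP [_ hu].
  by case: (Some u0 =P Some u) => // -[] h; rewrite h eqxx in hu.
split.
  move=> u v euv; case yuv: (y u v); last first.
    by rewrite muln0 addn0; have := xp u; lia.
  have [vC /andP [/andP [hu _] _]] := yP u v yuv.
  have := xmin _ _ hu; have := xpos v vC; lia.
split.
  move=> u v w euv euw wv; case yuv: (y u v); last first.
    by rewrite muln0 addn0; have := xp w; lia.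
  have [vC /andP [_ /forallP hw]] := yP u v yuv.
  have hwi : w \in iter (xf v).-1 (force_step e) C.
    apply/negPn/negP => wn; move/implyP: (hw w).
    by rewrite euw wn (negbTE wv); move/(_ isT).
  have := xmin _ _ hwi; have := xpos v vC; lia.
exact: xp.
Qed.

Theorem corollary3p5 (V : finType) (e : rel V) (s : V -> bool) (x : V -> nat)
    (y : V -> V -> bool) (z : nat) :
  simple_graph e ->
  IM_optimal e (#|V| - 1) s x y z ->
  let C := [set v | s v] in
  zero_forcing_set e C /\
  throttling_of e C = Some (IM_objective s z) /\
  is_throttling_number e (IM_objective s z).
Proof.
move=> _ [feas opt] C.
have zf : iter z (force_step e) C = setT.
  apply/setP => v; rewrite inE; apply: (feas_fill feas).
  by case: feas => _ [_ [_ [_ [_ h]]]]; apply: h.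
have [p [hpt [hp hmin]]] := prop_time_spec zf.
have hpz := hmin z zf.
have [s' [x' [y' [feas' obj']]]] := build hp hmin (bound hp hmin).
have := opt _ _ _ _ feas'; rewrite obj'.
have cardC : \sum_v (s v : nat) = #|C|.
  by rewrite -card_sum; apply: eq_bigr => v _; rewrite inE.
rewrite /IM_objective cardC => hle.
have -> : #|C| + z = #|C| + p by lia.
split; first by exists z.
split; first by rewrite /throttling_of hpt.
split; first by exists C; rewrite /throttling_of hpt.
move=> C' k'; rewrite /throttling_of.
case hpt': (prop_time e C') => [p'|] //= [<-].
have zf' := prop_time_some hpt'.
have [q [hq [hq1 hq2]]] := prop_time_spec zf'.
rewrite hq in hpt'; case: hpt' => <-.
have [s2 [x2 [y2 [feas2 obj2]]]] := build hq1 hq2 (bound hq1 hq2).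
have := opt _ _ _ _ feas2; rewrite obj2 /IM_objective cardC; lia.
Qed.
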